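(* Let $\mathcal C\subset\mathbb{R}^P$ be a compact convex set containing the origin as an interior point, and let $G=\gamma_{\mathcal C}$ be its gauge. Then there exists a constant $L_2>0$, independent of $y$, such that for any $\theta>0$, $\theta'>0$ and any $y\in\mathbb{R}^P$, $$\|\mathrm{Prox}_{\theta G}(y)-\mathrm{Prox}_{\theta' G}(y)\|\le L_2|\theta-\theta'|;$$ i.e. for any $y$, $\theta\mapsto\mathrm{Prox}_{\theta G}(y)$ is Lipschitz continuous on $]0,+\infty[$.
   Context: The gauge of a non-empty closed convex set $\mathcal C$ containing the origin is $\gamma_{\mathcal C}(y)=\inf\{\omega>0: y\in\omega\mathcal C\}$ (with $+\infty$ if the set is empty). $\mathrm{Prox}_{G}(y)=\operatorname{argmin}_z\frac12\|z-y\|^2+G(z)$. *)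

(* Defs.v *)
From HB Require Import structures.
From mathcomp Require Import all_boot all_order all_algebra.
From mathcomp Require Import all_classical all_reals all_analysis.
Set Implicit Arguments. Unset Strict Implicit. Unset Printing Implicit Defensive.
Import Order.TTheory GRing.Theory Num.Theory.
Import numFieldNormedType.Exports.
Local Open Scope classical_set_scope.
Local Open Scope ring_scope.

Definition enorm (R : realType) (P : nat) (v : 'rV[R]_P) : R :=
  Num.sqrt (\sum_(i < P) v ord0 i ^+ 2).

Definition convex_setR (R : realType) (P : nat) (C : set 'rV[R]_P) : Prop :=
  forall x y (t : R), C x -> C y -> 0 <= t -> t <= 1 ->
    C (t *: x + (1 - t) *: y).

(* Gauge: inf { w > 0 : y \in w C }, +oo if the set is empty. *)
Definition gauge (R : realType) (P : nat) (C : set 'rV[R]_P) (y : 'rV[R]_P)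
  : \bar R :=
  ereal_inf [set (w%:E)%E | w in [set w : R | 0 < w /\ exists2 c, C c & y = w *: c]].

Definition prox_obj (R : realType) (P : nat) (G : 'rV[R]_P -> \bar R)
  (y z : 'rV[R]_P) : \bar R :=
  ((2^-1 * enorm (z - y) ^+ 2)%:E + G z)%E.

Definition is_prox (R : realType) (P : nat) (G : 'rV[R]_P -> \bar R)
  (y z : 'rV[R]_P) : Prop :=
  forall w, (prox_obj G y z <= prox_obj G y w)%E.

(* Main.v *)
Require Import Defs.
From HB Require Import structures.
From mathcomp Require Import all_boot all_order all_algebra.
From mathcomp Require Import all_classical all_reals all_analysis.
From mathcomp Require Import ring lra.
Import Order.TTheory GRing.Theory Num.Theory.
Import numFieldNormedType.Exports.
Local Open Scope classical_set_scope.
Local Open Scope ring_scope.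

Local Unset Implicit Arguments.
Section E.
Variables (R : realType) (P : nat).
Implicit Types (u v : 'rV[R]_P).

Definition qn v := \sum_(i < P) v ord0 i ^+ 2.
Lemma qn_ge0 v : 0 <= qn v.
Proof. by apply: sumr_ge0 => i _; rewrite sqr_ge0. Qed.
Lemma enorm_ge0 v : 0 <= enorm v.
Proof. exact: sqrtr_ge0. Qed.
Lemma enorm_sq v : enorm v ^+ 2 = qn v.
Proof. by rewrite /enorm sqr_sqrtr // qn_ge0. Qed.
Lemma entry_le v j : `|v ord0 j| <= enorm v.
Proof.
rewrite -(ler_pXn2r (n:=2)) ?nnegrE ?enorm_ge0 // enorm_sq real_normK ?num_real //.
rewrite /qn (bigD1 j) //= lerDl; apply: sumr_ge0 => i _; exact: sqr_ge0.
Qed.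
Lemma enormZ (a : R) v : enorm (a *: v) = `|a| * enorm v.
Proof.
rewrite /enorm -sqrtr_sqr -sqrtrM ?sqr_ge0 //; congr Num.sqrt.
rewrite mulr_sumr; apply: eq_bigr => i _; rewrite mxE; by rewrite exprMn.
Qed.
Lemma enormB u v : enorm (u - v) = enorm (v - u).
Proof. by rewrite -opprB -scaleN1r enormZ normrN normr1 mul1r. Qed.
Lemma qn_mid u v : qn (2^-1 *: (u + v)) = (qn u + qn v)/2 - qn (u - v) / 4.
Proof.
rewrite /qn -big_split /= !mulr_suml -sumrB; apply: eq_bigr => i _; rewrite !mxE.
by field.
Qed.
End E.

Section G.
Set Default Proof Using "All".
Variables (R : realType) (P : nat) (C : set 'rV[R]_P).
Hypothesis Cconv : convex_setR C.
Variable r : R.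
Hypothesis r0 : 0 < r.
Hypothesis Hr : forall c : 'rV[R]_P, (forall j, `|c ord0 j| < r) -> C c.

Definition gS (x : 'rV[R]_P) := [set w : R | 0 < w /\ exists2 c, C c & x = w *: c].

Lemma gauge_ge0 x : (0 <= gauge C x)%E.
Proof. by apply: le_ereal_inf_tmp => _ [w [w0 _] <-]; rewrite lee_fin ltW. Qed.

Lemma gauge_ub x w : gS x w -> (gauge C x <= w%:E)%E.
Proof. by move=> Sw; apply: ereal_inf_lbound; exists w. Qed.

Lemma gS_bound x e : 0 < e -> gS x (2 / r * (enorm x + e)).
Proof.
move=> e0; have xe : 0 < enorm x + e by rewrite ltr_wpDl // enorm_ge0.
have w0 : 0 < 2 / r * (enorm x + e) by rewrite !mulr_gt0 // invr_gt0.
split => //; exists ((2 / r * (enorm x + e))^-1 *: x); last first.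
  by rewrite scalerA mulfV ?scale1r // gt_eqF.
apply: Hr => j; rewrite mxE normrM; apply: (le_lt_trans (y := `|(2 / r * (enorm x + e))^-1| * enorm x)).
  by rewrite ler_wpM2l // entry_le.
rewrite gtr0_norm ?invr_gt0 // mulrC ltr_pdivrMr //.
have -> : r * (2 / r * (enorm x + e)) = 2 * (enorm x + e).
  by field; apply: lt0r_neq0.
have := @enorm_ge0 _ _ x; lra.
Qed.

Lemma gauge_fin x : gauge C x \is a fin_num.
Proof.
rewrite ge0_fin_numE ?gauge_ge0 //.
have := @gauge_ub x _ (@gS_bound x 1 ltr01); move=> /le_lt_trans; apply; exact: ltry.
Qed.

Definition g x := fine (gauge C x).
Lemma gaugeE x : gauge C x = (g x)%:E.
Proof. by rewrite /g fineK // gauge_fin. Qed.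
Lemma g_ge0 x : 0 <= g x.
Proof. by rewrite -lee_fin -gaugeE gauge_ge0. Qed.
Lemma g_ub x w : gS x w -> g x <= w.
Proof. by move=> /gauge_ub; rewrite gaugeE lee_fin. Qed.
Lemma g_le x : g x <= 2 / r * enorm x.
Proof.
apply/ler_addgt0Pr => e e0.
have -> : 2 / r * enorm x + e = 2 / r * (enorm x + e * (r / 2)).
  by field; apply: lt0r_neq0.
by apply: g_ub; apply: gS_bound; rewrite mulr_gt0 // divr_gt0.
Qed.
Lemma g_approx x e : 0 < e -> exists2 w, gS x w & w < g x + e.
Proof.
move=> e0; have [_ [w Sw <-]] := lb_ereal_inf_adherent e0 (gauge_fin x).
by rewrite -/(gauge C x) gaugeE -EFinD lte_fin => H; exists w.
Qed.
Lemma gS_add a b wa wb : gS a wa -> gS b wb -> gS (a + b) (wa + wb).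
Proof.
move=> [wa0 [ca Ca ->]] [wb0 [cb Cb ->]]; have s0 : 0 < wa + wb by rewrite addr_gt0.
split => //; exists ((wa / (wa + wb)) *: ca + (1 - wa / (wa + wb)) *: cb).
  apply: Cconv => //; first by rewrite divr_ge0 // ltW.
  by rewrite ler_pdivrMr // mul1r lerDl ltW.
rewrite scalerDr !scalerA; by congr (_ *: _ + _ *: _); field; apply: lt0r_neq0.
Qed.
Lemma g_add a b : g (a + b) <= g a + g b.
Proof.
apply/ler_addgt0Pr => e e0.
have [wa Sa ha] := g_approx a (e/2) (divr_gt0 e0 (ltr0Sn _ 1)).
have [wb Sb hb] := g_approx b (e/2) (divr_gt0 e0 (ltr0Sn _ 1)).
have := g_ub _ _ (gS_add _ _ _ _ Sa Sb); lra.
Qed.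
Lemma g_scale s x : 0 < s -> g (s *: x) <= s * g x.
Proof.
move=> s0; apply/ler_addgt0Pr => e e0.
have [w [w0 [c Cc ->]] hw] := g_approx x (e/s) (divr_gt0 e0 s0).
have : gS (s *: (w *: c)) (s * w) by split; [rewrite mulr_gt0|exists c => //; rewrite scalerA].
move=> /g_ub H; apply: (le_trans H).
have : s * w <= s * (g (w *: c) + e / s) by rewrite ler_pM2l // ltW.
by rewrite mulrDr mulrCA divff ?gt_eqF // mulr1.
Qed.
Lemma g_lip a b : `|g a - g b| <= 2 / r * enorm (a - b).
Proof.
have h1 : g a <= g b + 2 / r * enorm (a - b).
  by have := g_add b (a - b); rewrite (addrC b) subrK => H; apply: (le_trans H); rewrite lerD2l g_le.
have h2 : g b <= g a + 2 / r * enorm (a - b).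
  by have := g_add a (b - a); rewrite (addrC a) subrK => H; apply: (le_trans H); rewrite lerD2l enormB g_le.
rewrite ler_norml; apply/andP; split; lra.
Qed.
End G.

Lemma ballC (R : realType) (P : nat) (C : set 'rV[R]_P) : interior C 0 ->
  exists2 r : R, 0 < r & forall c : 'rV[R]_P, (forall j, `|c ord0 j| < r) -> C c.
Proof.
move=> /nbhs_ballP [r r0 H]; exists r => // c Hc; apply: H.
split => // i j; rewrite (ord1 i) mxE /ball /= sub0r normrN; exact: Hc.
Qed.

Theorem proposition5 (R : realType) (P : nat) (C : set 'rV[R]_P) :
  compact C -> convex_setR C -> (interior C) 0 ->
  exists L2 : R, 0 < L2 /\
    forall (theta theta' : R) (y z z' : 'rV[R]_P),
      0 < theta -> 0 < theta' ->
      is_prox (fun x => (theta%:E * gauge C x)%E) y z ->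
      is_prox (fun x => (theta'%:E * gauge C x)%E) y z' ->
      enorm (z - z') <= L2 * `|theta - theta'|.
Proof.
move=> _ Cconv /ballC [r r0 Hr].
exists (4 / r); split; first by rewrite divr_gt0.
move=> th th' y z z' t0 t0' Hz Hz'.
pose m := 2^-1 *: (z + z').
have h1 := Hz m; have h2 := Hz' m.
rewrite /prox_obj !(gaugeE _ _ C Cconv r r0 Hr) -!EFinM -!EFinD !lee_fin !enorm_sq in h1 h2.
have em : m - y = 2^-1 *: ((z - y) + (z' - y)).
  by apply/rowP => i; rewrite !mxE; field.
have ed : (z - y) - (z' - y) = z - z' by apply/rowP => i; rewrite !mxE; ring.
rewrite em qn_mid ed in h1 h2.
have gm : g _ _ C m <= 2^-1 * (g _ _ C z + g _ _ C z').
  apply: (le_trans (g_scale _ _ C Cconv r r0 Hr _ _ _)); first by rewrite invr_gt0.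
  by rewrite ler_pM2l ?invr_gt0 // (g_add _ _ C Cconv r r0 Hr).
set gz := g _ _ C z in h1 h2 gm *.
set gz' := g _ _ C z' in h1 h2 gm *.
set gmm := g _ _ C m in h1 h2 gm *.
have lip := g_lip _ _ C Cconv r r0 Hr z z'; rewrite -/gz -/gz' in lip.
have gm1 : th * gmm <= th * (2^-1 * (gz + gz')) by rewrite ler_pM2l.
have gm2 : th' * gmm <= th' * (2^-1 * (gz + gz')) by rewrite ler_pM2l.
have key : qn _ _ (z - z') <= 2 * ((th' - th) * (gz - gz')) by nra.
have n1 : (th' - th) * (gz - gz') <= `|th - th'| * (2 / r * enorm (z - z')).
  apply: (le_trans (ler_norm _)); rewrite normrM distrC.
  by apply: ler_wpM2l.
rewrite -enorm_sq in key.
have e0 : 0 <= enorm (z - z') by apply: enorm_ge0.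
set e := enorm (z - z') in key n1 e0 *.
set d := `|th - th'| in n1 *.
have d0 : 0 <= d by rewrite normr_ge0.
have : e * e <= (4 / r * d) * e.
  have -> : 4 / r * d * e = 2 * (d * (2 / r * e)) by field; apply: lt0r_neq0.
  by rewrite -expr2; lra.
have c0 : 0 <= 4 / r * d by rewrite mulr_ge0 // divr_ge0 // ltW.
nra.
Qed.
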